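(* Let $\mathrm B_1=\{\mathbf x^{\mathbf d}: d_i<w_{i,1}\ \forall i\}$ and $\mathrm B_2=\{\mathbf x^{\mathbf d}: d_i<w_{i,2}\ \forall i\}$ be boxes in $x_1,\dots,x_r$ (all $w_{i,1},w_{i,2}$ positive integers), and $\beta=\mathrm B_1\cup\mathrm B_2$. Let $w_i=\max(w_{i,1},w_{i,2})$, $V_1=\{x_j: w_{j,1}>w_{j,2}\}$ and $V_2=\{x_k: w_{k,1}<w_{k,2}\}$. Then every minimal generator of $I_\beta$ is either a corner monomial $x_i^{w_i}$ for some $i$, or a two-variable monomial $x_j^{w_{j,2}}x_k^{w_{k,1}}$ with $x_j\in V_1$ and $x_k\in V_2$.
   Context: $I_\beta$ is the monomial ideal generated by all monomials not in $\beta$; its minimal generators are its minimal monomials under divisibility. *)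

(* Defs.v *)
From mathcomp Require Import all_boot.
Set Implicit Arguments. Unset Strict Implicit. Unset Printing Implicit Defensive.

(* A monomial x^d in the variables x_0, ..., x_{r-1} is represented by its
   exponent vector d : {ffun 'I_r -> nat}. *)
Notation monomial r := {ffun 'I_r -> nat}.

Definition mdvd (r : nat) (a b : monomial r) : bool := [forall i, a i <= b i].

Definition in_box (r : nat) (w : 'I_r -> nat) (d : monomial r) : bool :=
  [forall i, d i < w i].

Definition in_beta (r : nat) (w1 w2 : 'I_r -> nat) (d : monomial r) : bool :=
  in_box w1 d || in_box w2 d.

(* I_beta is generated by all monomials not in beta; its minimal generators are
   the monomials not in beta that are minimal under divisibility among those. *)
Definition in_I (r : nat) (beta : pred (monomial r)) (d : monomial r) : bool :=
  ~~ beta d.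

Definition minimal_generator (r : nat) (beta : pred (monomial r)) (d : monomial r)
  : Prop :=
  in_I beta d /\ forall e : monomial r, mdvd e d -> in_I beta e -> e = d.

Definition xpow (r : nat) (i : 'I_r) (a : nat) : monomial r :=
  [ffun l => if l == i then a else 0].

Definition xpow2 (r : nat) (j : 'I_r) (a : nat) (k : 'I_r) (b : nat) : monomial r :=
  [ffun l => if l == j then a else if l == k then b else 0].

(* Main.v *)
Require Import Defs.
From mathcomp Require Import all_boot.
From mathcomp Require Import zify.

Theorem lemma11p2 (r : nat) (w1 w2 : 'I_r -> nat)
  (hw1 : forall i, 0 < w1 i) (hw2 : forall i, 0 < w2 i)
  (d : monomial r) :
  minimal_generator (in_beta w1 w2) d ->
  (exists i : 'I_r, d = xpow i (maxn (w1 i) (w2 i)))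
  \/ (exists (j k : 'I_r), w1 j > w2 j /\ w1 k < w2 k /\
        d = xpow2 j (w2 j) k (w1 k)).
Proof.
move=> [hI hmin].
move: hI; rewrite /in_I /in_beta negb_or => /andP[/forallPn[a ha] /forallPn[b hb]].
rewrite -leqNgt in ha hb.
case: (boolP [exists i, maxn (w1 i) (w2 i) <= d i]).
- move/existsP=> [i hi]; left; exists i; symmetry; apply: hmin.
  + apply/forallP => l; rewrite ffunE; case: eqP => [->|_] //.
  + rewrite /in_I /in_beta negb_or; apply/andP; split; apply/forallPn; exists i;
      rewrite ffunE eqxx -leqNgt ?leq_maxl ?leq_maxr //.
- rewrite negb_exists => /forallP hnot.
  have ha' := hnot a; have hb' := hnot b.
  rewrite -ltnNge in ha' hb'.
  have hab : a != b.
    apply/eqP => E; subst b; lia.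
  right; exists b, a; split; first lia; split; first lia.
  symmetry; apply: hmin.
  + apply/forallP => l; rewrite ffunE; case: eqP => [->|_]; first lia.
    case: eqP => [->|_]; lia.
  + rewrite /in_I /in_beta negb_or; apply/andP; split; apply/forallPn.
    * exists a; rewrite ffunE (negbTE hab) eqxx -leqNgt //.
    * exists b; rewrite ffunE eqxx -leqNgt //.
Qed.
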